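(* Let $\mathcal K$ be an abstract Krivine structure. For all $a,b\in\mathcal P_\perp(\Pi)$, $$\overline{a\circ_\bullet b}=\overline{\bigcup\{c\in\mathcal P_\perp(\Pi): b\to_\perp c\subseteq a\}},$$ i.e. $\overline{a\circ_\bullet b}=a\,\sharp\,b$, where $a\,\sharp\,b$ is the infimum of $\{c\in\mathcal P_\perp(\Pi): a\le b\to_\perp c\}$ in $\mathcal P_\perp(\Pi)$ ordered by $a\le b\iff a\supseteq b$.
   Context: An abstract Krivine structure $\mathcal K$ consists of sets $\Lambda,\Pi$, a relation $\perp\subseteq\Lambda\times\Pi$, a map $\mathrm{push}$ written $t\cdot\pi$ (associating to the right), an application $ts$ on $\Lambda$, a subset $\mathrm{QP}\subseteq\Lambda$ closed under application, and $\mathsf K,\mathsf S\in\mathrm{QP}$ with: $t\perp s\cdot\pi\Rightarrow ts\perp\pi$; $t\perp\pi\Rightarrow\mathsf K\perp t\cdot s\cdot\pi$; $tu(su)\perp\pi\Rightarrow\mathsf S\perp t\cdot s\cdot u\cdot\pi$. Polars: $L^\perp=\{\pi:\forall t\in L,\ t\perp\pi\}$, ${}^\perp P=\{t:\forall\pi\in P,\ t\perp\pi\}$; $\overline P=({}^\perp P)^\perp$; $\mathcal P_\perp(\Pi)=\{P:\overline P=P\}$. For $P,Q\subseteq\Pi$: $P\to_\perp Q=\overline{\{t\cdot\pi:t\in{}^\perp P,\pi\in Q\}}$ and $P\circ_\bullet Q=\{\pi\in\Pi: t\cdot\pi'\in P\ \forall t\in{}^\perp Q,\ \pi'\in\overline{\{\pi\}}\}$.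 *)

(* Defs.v *)
Record AKS := {
  Lam : Type;
  Pi : Type;
  perp : Lam -> Pi -> Prop;
  push : Lam -> Pi -> Pi;
  app : Lam -> Lam -> Lam;
  QP : Lam -> Prop;
  QP_app : forall t s, QP t -> QP s -> QP (app t s);
  Kc : Lam;
  Sc : Lam;
  K_QP : QP Kc;
  S_QP : QP Sc;
  ax_push : forall t s pi, perp t (push s pi) -> perp (app t s) pi;
  ax_K : forall t s pi, perp t pi -> perp Kc (push t (push s pi));
  ax_S : forall t s u pi, perp (app (app t u) (app s u)) pi ->
           perp Sc (push t (push s (push u pi)))
}.

Section Defs.
Variable K : AKS.

Definition polarL (L : Lam K -> Prop) : Pi K -> Prop :=
  fun pi => forall t, L t -> perp K t pi.
Definition polarP (P : Pi K -> Prop) : Lam K -> Prop :=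
  fun t => forall pi, P pi -> perp K t pi.
Definition bar (P : Pi K -> Prop) : Pi K -> Prop := polarL (polarP P).
Definition is_closed (P : Pi K -> Prop) : Prop := bar P = P.
Definition arrow (P Q : Pi K -> Prop) : Pi K -> Prop :=
  bar (fun rho => exists t pi, polarP P t /\ Q pi /\ rho = push K t pi).
Definition circ (P Q : Pi K -> Prop) : Pi K -> Prop :=
  fun pi => forall t pi', polarP Q t -> bar (fun x => x = pi) pi' ->
              P (push K t pi').
Definition subset (P Q : Pi K -> Prop) : Prop := forall pi, P pi -> Q pi.
Definition sharp_union (a b : Pi K -> Prop) : Pi K -> Prop :=
  fun pi => exists c, is_closed c /\ subset (arrow b c) a /\ c pi.
End Defs.

(* Main.v *)
Require Import Defs.
From Stdlib Require Import FunctionalExtensionality PropExtensionality.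

Lemma bar_incl (K : AKS) (X : Pi K -> Prop) : forall pi, X pi -> bar K X pi.
Proof. intros pi H t Ht. apply Ht, H. Qed.

Lemma bar_mono (K : AKS) (X Y : Pi K -> Prop) :
  (forall pi, X pi -> Y pi) -> forall pi, bar K X pi -> bar K Y pi.
Proof. intros H pi Hb t Ht. apply Hb. intros p Hp. apply Ht, H, Hp. Qed.

Theorem mainTheorem8 (K : AKS) (a b : Pi K -> Prop) :
  is_closed K a -> is_closed K b ->
  bar K (circ K a b) = bar K (sharp_union K a b).
Proof.
  intros Ha Hb.
  assert (E : circ K a b = sharp_union K a b).
  { apply functional_extensionality; intro pi; apply propositional_extensionality; split.
    - intro H. exists (bar K (fun x => x = pi)). split; [|split].
      + unfold is_closed. apply functional_extensionality; intro p;
        apply propositional_extensionality; split.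
        * intros Hp t Ht. apply Hp. intros q Hq. apply Hq, Ht.
        * apply bar_incl.
      + intros p Hp. rewrite <- Ha. revert p Hp. apply bar_mono.
        intros r [t [p' [Ht [Hp' ->]]]]. apply H; assumption.
      + apply bar_incl. reflexivity.
    - intros [c [Hc [Har Hcp]]] t p' Ht Hp'.
      apply Har. apply bar_incl. exists t, p'. split; [exact Ht|split; [|reflexivity]].
      rewrite <- Hc. revert p' Hp'. apply bar_mono. intros q ->. exact Hcp. }
  rewrite E. reflexivity.
Qed.
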